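(* For every $n\ge 0$, a permutation $\pi$ of $\{1,\ldots,n\}$ can be produced as the output of a strictly locked jump queue with input $1,2,\ldots,n$ if and only if $\pi$ avoids both patterns $4231$ and $42513$.
   Context: A permutation $\pi=\pi_1\cdots\pi_n$ contains a pattern $\alpha=\alpha_1\cdots\alpha_k$ (a permutation of $\{1,\ldots,k\}$) if there are indices $i_1<\cdots<i_k$ with $\pi_{i_r}<\pi_{i_s}$ iff $\alpha_r<\alpha_s$; otherwise $\pi$ avoids $\alpha$. Jump queues. The input is $1,2,\ldots,n$, and at each step one may either append the next input element to the rear of the queue, or remove (output) some element of the queue; the sequence of outputs forms a permutation of $1,\ldots,n$ once all elements have been output. The front element of the queue may always be output. Outputting an element other than the front element is called a jump, and an element may jump only if it is not locked. When an element $x$ jumps, every element currently in the queue behind $x$ (closer to the rear) becomes locked; this lock is released at the moment when all elements that were in front of $x$ at the time of the jump have been output. An element is locked as long as at least one lock applying to it is in force. (In particular jumping the rear element locks nothing.) - In a strictly locked jump queue, additionally, any element appended to the queue while the queue contains some locked element is itself locked, and is released under the same condition(s) as those locks. *)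

(* Defs.v *)
From mathcomp Require Import all_boot.
Set Implicit Arguments. Unset Strict Implicit. Unset Printing Implicit Defensive.

Definition order_iso (s a : seq nat) : bool :=
  (size s == size a) &&
  [forall r : 'I_(size a), forall t : 'I_(size a),
     (nth 0 s r < nth 0 s t) == (nth 0 a r < nth 0 a t)].

Definition contains (pi alpha : seq nat) : Prop :=
  exists s : seq nat, subseq s pi /\ order_iso s alpha.

Definition avoids (pi alpha : seq nat) : Prop := ~ contains pi alpha.

(* A lock is a pair (F, L): F = the elements that were in front of the
   jumping element at the time of the jump, L = the elements locked by it.
   The lock is in force as long as some element of F is still in the queue
   (elements leave the queue only by being output). *)
Definition lock := (seq nat * seq nat)%type.

Record jq_state := JQ {
  jq_next  : nat;
  jq_queue : seq nat;     (* queue contents, front first *)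
  jq_locks : seq lock;    (* all locks created so far *)
  jq_out   : seq nat
}.

Definition lock_in_force (q : seq nat) (lk : lock) : bool :=
  has (fun f => f \in q) lk.1.

Definition is_locked (q : seq nat) (locks : seq lock) (y : nat) : bool :=
  has (fun lk => lock_in_force q lk && (y \in lk.2)) locks.

Inductive sljq_step (n : nat) : jq_state -> jq_state -> Prop :=
  (* append the next input element to the rear; if the queue contains some
     locked element, the new element becomes locked under the same
     conditions as the locks applying to the locked elements in the queue *)
  | step_push : forall i q locks out,
      i <= n ->
      sljq_step n (JQ i q locks out)
        (JQ i.+1 (rcons q i)
           (if has (is_locked q locks) q then
              [seq (if lock_in_force q lk && has (fun y => y \in q) lk.2
                    then (lk.1, rcons lk.2 i) else lk) | lk <- locks]
            else locks)
           out)
  | step_front : forall i x q locks out,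
      sljq_step n (JQ i (x :: q) locks out) (JQ i q locks (rcons out x))
  (* jump: output a non-front element x that is not locked; every element
     behind x becomes locked until all elements in front of x are output *)
  | step_jump : forall i F x B locks out,
      F != [::] ->
      ~~ is_locked (F ++ x :: B) locks x ->
      sljq_step n (JQ i (F ++ x :: B) locks out)
        (JQ i (F ++ B) (rcons locks (F, B)) (rcons out x)).

Inductive sljq_reach (n : nat) : jq_state -> jq_state -> Prop :=
  | reach_refl : forall s, sljq_reach n s s
  | reach_step : forall s1 s2 s3,
      sljq_step n s1 s2 -> sljq_reach n s2 s3 -> sljq_reach n s1 s3.

Definition sljq_output (n : nat) (pi : seq nat) : Prop :=
  exists locks,
    sljq_reach n (JQ 1 [::] [::] [::]) (JQ n.+1 [::] locks pi).

(* Main.v *)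
Require Import Defs.
From mathcomp Require Import all_boot.
From mathcomp Require Import zify.
Set Implicit Arguments. Unset Strict Implicit. Unset Printing Implicit Defensive.

Definition P4 (pi : seq nat) := exists m j y a,
  subseq [:: m; j; y; a] pi /\ a < j /\ j < y /\ y < m.
Definition P5 (pi : seq nat) := exists m j x a y,
  subseq [:: m; j; x; a; y] pi /\ a < j /\ j < y /\ y < m /\ m < x.

Lemma P4_contains pi : P4 pi <-> contains pi [:: 4; 2; 3; 1].
Proof.
split.
- move=> [m [j [y [a [Hs [H1 [H2 H3]]]]]]].
  exists [:: m; j; y; a]; split => //.
  rewrite /order_iso /=; apply/forallP => r; apply/forallP => t.
  case: r => [[|[|[|[|r]]]] //= _]; case: t => [[|[|[|[|t]]]] //= _]; apply/eqP; lia.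
- move=> [s [Hs /andP [/eqP Hsz /forallP Hf]]].
  case: s Hs Hsz Hf => [|s0 [|s1 [|s2 [|s3 [|s4 s]]]]] //= Hs _ Hf.
  exists s0, s1, s2, s3; split => //.
  have h := fun r t => (elimT forallP (Hf r)) t.
  move: (h (Ordinal (isT : 3 < 4)) (Ordinal (isT : 1 < 4)))
        (h (Ordinal (isT : 1 < 4)) (Ordinal (isT : 2 < 4)))
        (h (Ordinal (isT : 2 < 4)) (Ordinal (isT : 0 < 4))) => /= /eqP -> /eqP -> /eqP ->.
  done.
Qed.

Lemma P5_contains pi : P5 pi <-> contains pi [:: 4; 2; 5; 1; 3].
Proof.
split.
- move=> [m [j [x [a [y [Hs [H1 [H2 [H3 H4]]]]]]]]].
  exists [:: m; j; x; a; y]; split => //.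
  rewrite /order_iso /=; apply/forallP => r; apply/forallP => t.
  case: r => [[|[|[|[|[|r]]]]] //= _]; case: t => [[|[|[|[|[|t]]]]] //= _]; apply/eqP; lia.
- move=> [s [Hs /andP [/eqP Hsz /forallP Hf]]].
  case: s Hs Hsz Hf => [|s0 [|s1 [|s2 [|s3 [|s4 [|s5 s]]]]]] //= Hs _ Hf.
  exists s0, s1, s2, s3, s4; split => //.
  have h := fun r t => (elimT forallP (Hf r)) t.
  move: (h (Ordinal (isT : 3 < 5)) (Ordinal (isT : 1 < 5)))
        (h (Ordinal (isT : 1 < 5)) (Ordinal (isT : 4 < 5)))
        (h (Ordinal (isT : 4 < 5)) (Ordinal (isT : 0 < 5)))
        (h (Ordinal (isT : 0 < 5)) (Ordinal (isT : 2 < 5))) => /= /eqP -> /eqP -> /eqP -> /eqP ->.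
  done.
Qed.

Lemma subseq_rcons2 (s t : seq nat) y x :
  subseq (rcons s y) (rcons t x) -> subseq (rcons s y) t \/ (y = x /\ subseq s t).
Proof.
move=> H; have : subseq (rev (rcons s y)) (rev (rcons t x)) by rewrite subseq_rev.
rewrite !rev_rcons /=.
case: eqP => [->|_] H2; first by right; rewrite subseq_rev in H2.
by left; rewrite -rev_rcons subseq_rev in H2.
Qed.

Lemma pw_front (x a : nat) q : pairwise ltn (x :: q) -> a \in q -> x < a.
Proof. by rewrite pairwise_cons => /andP [/allP H _] /H. Qed.

Lemma pw_splitF (F B : seq nat) x a : pairwise ltn (F ++ x :: B) -> a \in F -> a < x.
Proof.
rewrite pairwise_cat => /and3P [H _ _] Ha.
by move: H => /allrelP /(_ a x Ha); rewrite mem_head; apply.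
Qed.

Lemma pw_splitB (F B : seq nat) x z : pairwise ltn (F ++ x :: B) -> z \in B -> x < z.
Proof.
rewrite pairwise_cat pairwise_cons => /and3P [_ _ /andP [/allP H _]].
exact: H.
Qed.


Definition Lbound (i : nat) (locks : seq Defs.lock) :=
  forall lk, lk \in locks -> (forall z, z \in lk.1 -> z < i) /\ (forall z, z \in lk.2 -> z < i).

Record Base n (s : jq_state) : Prop := {
  bB1 : 0 < jq_next s <= n.+1;
  bB2 : uniq (jq_out s ++ jq_queue s);
  bB3 : forall z, (z \in jq_out s ++ jq_queue s) = (0 < z < jq_next s);
  bB4 : pairwise ltn (jq_queue s);
  bLb : Lbound (jq_next s) (jq_locks s)
}.

Definition pushf (i : nat) (q : seq nat) (locks : seq Defs.lock) :=
  if has (is_locked q locks) q then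
    [seq (if lock_in_force q lk && has (fun y => y \in q) lk.2
          then (lk.1, rcons lk.2 i) else lk) | lk <- locks]
  else locks.

Lemma pushf_mem i q locks lk' : lk' \in pushf i q locks ->
  exists2 lk, lk \in locks &
    (lk' = lk \/ (lk' = (lk.1, rcons lk.2 i) /\ lock_in_force q lk /\ has (fun y => y \in q) lk.2)).
Proof.
rewrite /pushf; case: ifP => _; last by exists lk'; [|left].
case/mapP => lk Hlk ->; exists lk => //.
by case: ifP => [/andP [H1 H2]|_]; [right|left].
Qed.

Definition pcond (q : seq nat) (locks : seq Defs.lock) (lk : Defs.lock) :=
  has (is_locked q locks) q && (lock_in_force q lk && has (fun y => y \in q) lk.2).

Lemma pushf_mem2 i q locks lk' : lk' \in pushf i q locks ->
  exists2 lk, lk \in locks &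
    lk' = if pcond q locks lk then (lk.1, rcons lk.2 i) else lk.
Proof.
rewrite /pushf /pcond; case: ifP => _ /=; last by exists lk'.
by case/mapP => lk Hlk ->; exists lk.
Qed.

Lemma pushf_keep i q locks lk : lk \in locks ->
  exists2 lk', lk' \in pushf i q locks & lk'.1 = lk.1 /\ {subset lk.2 <= lk'.2}.
Proof.
move=> Hlk; rewrite /pushf; case: ifP => _; last by exists lk => //; split.
exists (if lock_in_force q lk && has (fun y => y \in q) lk.2
        then (lk.1, rcons lk.2 i) else lk); first exact: map_f.
case: ifP => _ /=; split => // z Hz //; by rewrite mem_rcons in_cons Hz orbT.
Qed.

Lemma mem_q_lt n s z : Base n s -> z \in jq_queue s -> 0 < z < jq_next s.
Proof. by move=> B Hz; rewrite -(bB3 B) mem_cat Hz orbT. Qed.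
Lemma mem_out_lt n s z : Base n s -> z \in jq_out s -> 0 < z < jq_next s.
Proof. by move=> B Hz; rewrite -(bB3 B) mem_cat Hz. Qed.
Lemma out_notq n s z : Base n s -> z \in jq_out s -> z \in jq_queue s -> False.
Proof.
move=> B H1 H2; have := bB2 B; rewrite cat_uniq => /and3P [_ /hasP H _].
by apply: H; exists z.
Qed.

Lemma base_step n s s' : sljq_step n s s' -> Base n s -> Base n s'.
Proof.
case=> [i q locks out Hi|i x q locks out|i F x B locks out HF Hx] [/= H1 H2 H3 H4 H5].
- have Hni : i \notin out ++ q by rewrite H3 ltnn andbF.
  split => /=.
  + lia.
  + by rewrite -rcons_cat rcons_uniq Hni.
  + move=> z; rewrite -rcons_cat mem_rcons in_cons H3.
    case: eqP => [->|Hz]; lia.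
  + rewrite pairwise_rcons H4 andbT; apply/allP => z Hz.
    by have := H3 z; rewrite mem_cat Hz orbT => /esym /andP [].
  + move=> lk' /(pushf_mem) [lk /H5 [Ha Hb] [->|[-> _]]] /=.
      split=> z Hz; [have := Ha z Hz|have := Hb z Hz]; lia.
    split=> z; first by move/Ha; lia.
    rewrite mem_rcons in_cons; case: eqP => [->|_] //= /Hb; lia.
- split => //=.
  + by rewrite cat_rcons.
  + by move=> z; rewrite cat_rcons.
  + by case/andP: H4.
- have Hp : perm_eq (rcons out x ++ (F ++ B)) (out ++ (F ++ x :: B)).
    by rewrite cat_rcons perm_cat2l -cat1s perm_catCA.
  split => /=.
  + lia.
  + by rewrite (perm_uniq Hp).
  + by move=> z; rewrite (perm_mem Hp).
  + apply: subseq_pairwise H4; by rewrite subseq_cat2l -cat1s suffix_subseq.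
  + move=> lk; rewrite mem_rcons in_cons => /orP [/eqP -> /=|/H5 //].
    split=> z Hz; have : z \in out ++ F ++ x :: B by rewrite !mem_cat in_cons Hz !orbT.
    * by rewrite H3 => /andP [].
    * by rewrite H3 => /andP [].
Qed.

Record Inv1 (s : jq_state) : Prop := {
  iLf : forall lk, lk \in jq_locks s -> forall a z, a \in lk.1 -> z \in lk.2 -> a < z;
  iLsub : forall lk, lk \in jq_locks s -> lock_in_force (jq_queue s) lk ->
            forall z, z \in lk.2 -> z \in jq_queue s;
  iLup : forall lk, lk \in jq_locks s -> lock_in_force (jq_queue s) lk ->
            forall w z, w \in lk.2 -> z \in jq_queue s -> w <= z -> z \in lk.2;
  iL1 : forall m j a y, subseq [:: m; j] (jq_out s) -> a \in jq_queue s -> y \in jq_queue s ->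
          a < j -> j < y -> y < m ->
          exists2 lk, lk \in jq_locks s & (a \in lk.1) && (y \in lk.2);
  iP1 : forall m j y a, subseq [:: m; j; y] (jq_out s) -> a \in jq_queue s ->
          a < j -> j < y -> y < m -> False;
  iQ1 : forall m j x a y, subseq [:: m; j; x] (jq_out s) -> a \in jq_queue s ->
          y \in jq_queue s -> a < j -> j < y -> y < m -> m < x -> False;
  iQ2 : forall m j x a y, subseq [:: m; j; x; a] (jq_out s) -> y \in jq_queue s ->
          a < j -> j < y -> y < m -> m < x -> False;
  iF1 : forall m j y a, subseq [:: m; j; y; a] (jq_out s) ->
          a < j -> j < y -> y < m -> False;
  iF2 : forall m j x a y, subseq [:: m; j; x; a; y] (jq_out s) ->
          a < j -> j < y -> y < m -> m < x -> False
}.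

Ltac slia := repeat match goal with
  | H : context [ _ \in _ ] |- _ => clear H
  | H : forall _, _ |- _ => clear H
  | H : exists2 _, _ & _ |- _ => clear H
  | H : is_true (subseq _ _) |- _ => clear H
  | H : is_true (pairwise _ _) |- _ => clear H
  | H : is_true (uniq _) |- _ => clear H
  | H : is_true (lock_in_force _ _) |- _ => clear H
  | H : Lbound _ _ |- _ => clear H
  end; lia.

Lemma inv1_step n s s' : sljq_step n s s' -> Base n s -> Inv1 s -> Inv1 s'.
Proof.
move=> st B I; move: st B I.
case=> [i q locks out Hi|i x q locks out|i F x B locks out HF Hx]
  [/= H1 H2 H3 H4 H5] [/= Lf Lsub Lup L1 P1 Q1 Q2 F1 F2].
-
  have qlt : forall z, z \in q -> z < i.
    by move=> z Hz; have := H3 z; rewrite mem_cat Hz orbT => /esym /andP [].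
  have olt : forall z, z \in out -> z < i.
    by move=> z Hz; have := H3 z; rewrite mem_cat Hz => /esym /andP [].
  have inq : forall z, z < i -> z \in rcons q i -> z \in q.
    by move=> z Hz; rewrite mem_rcons in_cons; case: eqP => [E|//]; subst; rewrite ltnn in Hz.
  have lfq : forall lk, lk \in locks -> lock_in_force (rcons q i) lk -> lock_in_force q lk.
    move=> lk Hlk /hasP [a Ha Haq]; apply/hasP; exists a => //.
    by apply: inq => //; case: (H5 _ Hlk) => /(_ a Ha).
  have mo2 : forall m j, subseq [:: m; j] out -> m < i /\ j < i.
    move=> m j Hs; split; apply: olt; apply: (mem_subseq Hs); by rewrite !inE eqxx ?orbT.
  have lkf : forall lk', lk' \in pushf i q locks -> exists2 lk, lk \in locks &
     [/\ lk'.1 = lk.1, {subset lk.2 <= lk'.2} & forall z, z \in lk'.2 -> z != i -> z \in lk.2].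
    move=> lk' /pushf_mem2 [lk Hlk ->]; exists lk => //.
    case: ifP => _ /=; split => //.
    - by move=> z Hz; rewrite mem_rcons in_cons Hz orbT.
    - by move=> z; rewrite mem_rcons in_cons; case: eqP.
  have sub_lt : forall s z, subseq s out -> z \in s -> z < i.
    by move=> s0 z Hs Hz; apply: olt; apply: (mem_subseq Hs).
  split => /=.
  + move=> lk' /lkf [lk Hlk [-> Hs Hs']] a z Ha Hz.
    case: (eqVneq z i) => [->|Nz]; first by case: (H5 _ Hlk) => /(_ a Ha).
    exact: Lf Hlk a z Ha (Hs' z Hz Nz).
  + move=> lk' Hlk'; move: (Hlk') => /lkf [lk Hlk [E Hs Hs']] Hf z Hz.
    have Hf0 : lock_in_force q lk by apply: lfq; rewrite // /lock_in_force -E.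
    case: (eqVneq z i) => [->|Nz]; first by rewrite mem_rcons mem_head.
    by rewrite mem_rcons in_cons (Lsub lk Hlk Hf0 z (Hs' z Hz Nz)) orbT.
  + move=> lk' Hlk' Hf w z Hw Hz Hwz.
    move: (Hlk') => /lkf [lk Hlk [E Hs Hs']].
    have Hf0 : lock_in_force q lk by apply: lfq; rewrite // /lock_in_force -E.
    have wlt : w \in lk'.2 -> w != i -> w < i.
      by move=> H Hn; case: (H5 _ Hlk) => _; apply; apply: Hs'.
    case: (eqVneq z i) => [Ezi|Nzi].
    * subst z; move: Hlk' => /pushf_mem2 [lk2 Hlk2 E2].
      case: (boolP (pcond q locks lk2)) => Hc; first by rewrite E2 Hc /= mem_rcons mem_head.
      exfalso; rewrite (negbTE Hc) in E2; subst lk'.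
      have Hf2 : lock_in_force q lk2 by apply: lfq.
      have Hwq : w \in q := Lsub lk2 Hlk2 Hf2 w Hw.
      move/negP: Hc; apply; rewrite /pcond Hf2 /=.
      apply/andP; split; last by apply/hasP; exists w.
      apply/hasP; exists w => //; apply/hasP; exists lk2 => //; by rewrite Hf2 Hw.
    * have zq : z \in q by move: Hz; rewrite mem_rcons in_cons (negbTE Nzi).
      have Nw : w != i by apply/eqP => Ew; subst w; have := qlt z zq; slia.
      exact: Hs (Lup lk Hlk Hf0 w z (Hs' w Hw Nw) zq Hwz).
  + move=> m j a y Hs Ha Hy Haj Hjy Hym.
    have mi : m < i by apply: (sub_lt _ m Hs); rewrite !inE eqxx.
    have [lk Hlk /andP [Ha1 Hy2]] := L1 m j a y Hs (inq a ltac:(slia) Ha) (inq y ltac:(slia) Hy) Haj Hjy Hym.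
    have [lk' Hlk' [E Hsub]] := pushf_keep i q Hlk.
    by exists lk' => //; rewrite E Ha1 (Hsub _ Hy2).
  + move=> m j y a Hs Ha Haj Hjy Hym.
    have ji : j < i by apply: (sub_lt _ j Hs); rewrite !inE eqxx orbT.
    exact: P1 m j y a Hs (inq a ltac:(slia) Ha) Haj Hjy Hym.
  + move=> m j x a y Hs Ha Hy Haj Hjy Hym Hmx.
    have mi : m < i by apply: (sub_lt _ m Hs); rewrite !inE eqxx.
    exact: Q1 m j x a y Hs (inq a ltac:(slia) Ha) (inq y ltac:(slia) Hy) Haj Hjy Hym Hmx.
  + move=> m j x a y Hs Hy Haj Hjy Hym Hmx.
    have mi : m < i by apply: (sub_lt _ m Hs); rewrite !inE eqxx.
    exact: Q2 m j x a y Hs (inq y ltac:(slia) Hy) Haj Hjy Hym Hmx.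
  + exact: F1.
  + exact: F2.
-
  have xlt : forall a, a \in q -> x < a by move=> a Ha; case/andP: H4 => /allP /(_ a Ha).
  have sq : forall z, z \in q -> z \in x :: q by move=> z Hz; rewrite in_cons Hz orbT.
  have xq : x \in x :: q := mem_head x q.
  have lfq : forall lk, lock_in_force q lk -> lock_in_force (x :: q) lk.
    by move=> lk /hasP [a Ha Haq]; apply/hasP; exists a => //; apply: sq.
  split => /=.
  + exact: Lf.
  + move=> lk Hlk Hf z Hz.
    have := Lsub lk Hlk (lfq _ Hf) z Hz; rewrite in_cons => /orP [/eqP Ez|//].
    subst z; case/hasP: Hf => a Ha Haq.
    have := Lf lk Hlk a x Ha Hz; have := xlt a Haq; slia.
  + move=> lk Hlk Hf w z Hw Hz Hwz; exact: Lup lk Hlk (lfq _ Hf) w z Hw (sq z Hz) Hwz.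
  + move=> m j a y Hs Ha Hy Haj Hjy Hym.
    case: (@subseq_rcons2 [:: m] out j x Hs) => [Hs'|[E Hs']].
      exact: L1 m j a y Hs' (sq a Ha) (sq y Hy) Haj Hjy Hym.
    subst j; have := xlt a Ha; slia.
  + move=> m j y a Hs Ha Haj Hjy Hym.
    case: (@subseq_rcons2 [:: m; j] out y x Hs) => [Hs'|[E Hs']].
      exact: P1 m j y a Hs' (sq a Ha) Haj Hjy Hym.
    subst y; have := xlt a Ha; slia.
  + move=> m j x' a y Hs Ha Hy Haj Hjy Hym Hmx.
    case: (@subseq_rcons2 [:: m; j] out x' x Hs) => [Hs'|[E Hs']].
      exact: Q1 m j x' a y Hs' (sq a Ha) (sq y Hy) Haj Hjy Hym Hmx.
    subst x'; have := xlt a Ha; slia.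
  + move=> m j x' a y Hs Hy Haj Hjy Hym Hmx.
    case: (@subseq_rcons2 [:: m; j; x'] out a x Hs) => [Hs'|[E Hs']].
      exact: Q2 m j x' a y Hs' (sq y Hy) Haj Hjy Hym Hmx.
    subst a; exact: Q1 m j x' x y Hs' xq (sq y Hy) Haj Hjy Hym Hmx.
  + move=> m j y a Hs Haj Hjy Hym.
    case: (@subseq_rcons2 [:: m; j; y] out a x Hs) => [Hs'|[E Hs']].
      exact: F1 m j y a Hs' Haj Hjy Hym.
    subst a; exact: P1 m j y x Hs' xq Haj Hjy Hym.
  + move=> m j x' a y Hs Haj Hjy Hym Hmx.
    case: (@subseq_rcons2 [:: m; j; x'; a] out y x Hs) => [Hs'|[E Hs']].
      exact: F2 m j x' a y Hs' Haj Hjy Hym Hmx.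
    subst y; exact: Q2 m j x' a x Hs' xq Haj Hjy Hym Hmx.
-
  set Q := F ++ x :: B.
  have sq : forall z, z \in F ++ B -> z \in Q.
    by move=> z; rewrite /Q !mem_cat in_cons => /orP [->|->]; rewrite ?orbT.
  have xq : x \in Q by rewrite /Q mem_cat mem_head orbT.
  have lfq : forall lk, lock_in_force (F ++ B) lk -> lock_in_force Q lk.
    by move=> lk /hasP [a Ha Haq]; apply/hasP; exists a => //; apply: sq.
  have nolock : forall lk a, lk \in locks -> a \in lk.1 -> a \in Q -> x \in lk.2 -> False.
    move=> lk a Hlk Ha Haq Hx2; move/negP: Hx; apply; apply/hasP; exists lk => //.
    by rewrite Hx2 andbT; apply/hasP; exists a.
  have inF : forall a, a \in F ++ B -> a < x -> a \in F.
    move=> a; rewrite mem_cat => /orP [//|Ha] Hax.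
    by have := pw_splitB H4 Ha; slia.
  have inB : forall a, a \in F ++ B -> x < a -> a \in B.
    move=> a; rewrite mem_cat => /orP [Ha|//] Hax.
    by have := pw_splitF H4 Ha; slia.
  have inQ' : forall z, z \in Q -> z != x -> z \in F ++ B.
    move=> z; rewrite /Q !mem_cat in_cons => /orP [->//|/orP [/eqP ->|->]];
      by rewrite ?eqxx ?orbT.
  have lkE : forall lk, lk \in rcons locks (F, B) -> lk = (F, B) \/ lk \in locks.
    by move=> lk; rewrite mem_rcons in_cons => /orP [/eqP ->|->]; [left|right].
  have lkI : forall lk, lk \in locks -> lk \in rcons locks (F, B).
    by move=> lk Hlk; rewrite mem_rcons in_cons Hlk orbT.
  split => /=.
  + move=> lk /lkE [->|Hlk] a z /=.
      by move=> Ha Hz; have := pw_splitF H4 Ha; have := pw_splitB H4 Hz; slia.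
    exact: Lf.
  + move=> lk /lkE [->|Hlk] Hf z Hz /=.
      by rewrite mem_cat Hz orbT.
    apply: inQ'; first exact: Lsub lk Hlk (lfq _ Hf) z Hz.
    apply/eqP => Ez; subst z; case/hasP: Hf => a Ha Haq.
    exact: nolock lk a Hlk Ha (sq a Haq) Hz.
  + move=> lk /lkE [->|Hlk] Hf w z Hw Hz Hwz /=.
      rewrite mem_cat in Hz; case/orP: Hz => [Hz|//].
      by have := pw_splitF H4 Hz; have := pw_splitB H4 Hw; slia.
    exact: Lup lk Hlk (lfq _ Hf) w z Hw (sq z Hz) Hwz.
  + move=> m j a y Hs Ha Hy Haj Hjy Hym.
    case: (@subseq_rcons2 [:: m] out j x Hs) => [Hs'|[E Hs']].
      have [lk Hlk H] := L1 m j a y Hs' (sq a Ha) (sq y Hy) Haj Hjy Hym.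
      by exists lk => //; apply: lkI.
    subst j; exists (F, B); first by rewrite mem_rcons mem_head.
    by rewrite /= (inF a Ha Haj) (inB y Hy Hjy).
  + move=> m j y a Hs Ha Haj Hjy Hym.
    case: (@subseq_rcons2 [:: m; j] out y x Hs) => [Hs'|[E Hs']].
      exact: P1 m j y a Hs' (sq a Ha) Haj Hjy Hym.
    subst y; have [lk Hlk /andP [H1a H2x]] := L1 m j a x Hs' (sq a Ha) xq Haj Hjy Hym.
    exact: nolock lk a Hlk H1a (sq a Ha) H2x.
  + move=> m j x' a y Hs Ha Hy Haj Hjy Hym Hmx.
    case: (@subseq_rcons2 [:: m; j] out x' x Hs) => [Hs'|[E Hs']].
      exact: Q1 m j x' a y Hs' (sq a Ha) (sq y Hy) Haj Hjy Hym Hmx.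
    subst x'; have [lk Hlk /andP [H1a H2y]] := L1 m j a y Hs' (sq a Ha) (sq y Hy) Haj Hjy Hym.
    have Hf : lock_in_force Q lk by apply/hasP; exists a => //; apply: sq.
    have H2x := Lup lk Hlk Hf y x H2y xq ltac:(slia).
    exact: nolock lk a Hlk H1a (sq a Ha) H2x.
  + move=> m j x' a y Hs Hy Haj Hjy Hym Hmx.
    case: (@subseq_rcons2 [:: m; j; x'] out a x Hs) => [Hs'|[E Hs']].
      exact: Q2 m j x' a y Hs' (sq y Hy) Haj Hjy Hym Hmx.
    subst a; exact: Q1 m j x' x y Hs' xq (sq y Hy) Haj Hjy Hym Hmx.
  + move=> m j y a Hs Haj Hjy Hym.
    case: (@subseq_rcons2 [:: m; j; y] out a x Hs) => [Hs'|[E Hs']].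
      exact: F1 m j y a Hs' Haj Hjy Hym.
    subst a; exact: P1 m j y x Hs' xq Haj Hjy Hym.
  + move=> m j x' a y Hs Haj Hjy Hym Hmx.
    case: (@subseq_rcons2 [:: m; j; x'; a] out y x Hs) => [Hs'|[E Hs']].
      exact: F2 m j x' a y Hs' Haj Hjy Hym Hmx.
    subst y; exact: Q2 m j x' a x Hs' xq Haj Hjy Hym Hmx.
Qed.

Lemma reach_trans n s1 s2 s3 : sljq_reach n s1 s2 -> sljq_reach n s2 s3 -> sljq_reach n s1 s3.
Proof.
elim=> [//|a b c Hab _ IH] H; exact: reach_step Hab (IH H).
Qed.

Lemma reach1 n s1 s2 : sljq_step n s1 s2 -> sljq_reach n s1 s2.
Proof. move=> H; exact: reach_step H (reach_refl _ _). Qed.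

Lemma base_init n : Base n (JQ 1 [::] [::] [::]).
Proof. by split => //= -[|z]. Qed.

Lemma inv1_init : Inv1 (JQ 1 [::] [::] [::]).
Proof. by split. Qed.

Lemma inv1_reach n s s' : sljq_reach n s s' -> Base n s -> Inv1 s -> Base n s' /\ Inv1 s'.
Proof.
elim=> [//|a b c Hab _ IH] B I; apply: IH; [exact: base_step Hab B|exact: inv1_step Hab B I].
Qed.

Lemma forward n pi : sljq_output n pi ->
  avoids pi [:: 4; 2; 3; 1] /\ avoids pi [:: 4; 2; 5; 1; 3].
Proof.
move=> [locks Hr].
have [_ [_ _ _ _ _ _ _ F1 F2]] := inv1_reach Hr (base_init n) inv1_init.
split.
- move/P4_contains => [m [j [y [a [Hs [H1 [H2 H3]]]]]]]; exact: F1 m j y a Hs H1 H2 H3.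
- move/P5_contains => [m [j [x [a [y [Hs [H1 [H2 [H3 H4]]]]]]]]]; exact: F2 m j x a y Hs H1 H2 H3 H4.
Qed.

Definition W (out q L2 : seq nat) (a z : nat) :=
  exists m j, subseq [:: m; j] out /\ a < j /\ j < z /\
    (z < m \/ exists y, y \in L2 /\ y \in q /\ j < y /\ y < m /\ m < z).

Definition LockOK (q : seq nat) (locks : seq Defs.lock) (out : seq nat) :=
  forall lk, lk \in locks -> forall a z, a \in lk.1 -> a \in q -> z \in lk.2 -> z \in q ->
    W out q lk.2 a z.

Lemma W_mono out out' q q' L L' a z :
  subseq out out' -> {subset L <= L'} ->
  (forall y, y \in L -> y \in q -> a < y -> y \in q') ->
  W out q L a z -> W out' q' L' a z.
Proof.
move=> Ho HL Hq [m [j [Hs [Haj [Hjz H]]]]]; exists m, j; split; first exact: subseq_trans Ho.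
do 2 split => //; case: H => [H|[y [Hy1 [Hy2 [H1 [H2 H3]]]]]]; [by left|right].
exists y; split; first exact: HL Hy1.
split; last by [].
apply: Hq => //; slia.
Qed.

Record GI n (s : jq_state) : Prop := {
  gB : Base n s;
  gL : LockOK (jq_queue s) (jq_locks s) (jq_out s)
}.

Lemma push_GI n i q locks out : i <= n -> GI n (JQ i q locks out) ->
  GI n (JQ i.+1 (rcons q i) (pushf i q locks) out).
Proof.
move=> Hi [B L]; split; first exact: base_step (@step_push n i q locks out Hi) B.
case: B => /= H1 H2 H3 H4 H5.
have qlt : forall z, z \in q -> z < i.
  by move=> z Hz; have := H3 z; rewrite mem_cat Hz orbT => /esym /andP [].
have olt : forall z, z \in out -> z < i.
  by move=> z Hz; have := H3 z; rewrite mem_cat Hz => /esym /andP [].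
have inq : forall z, z < i -> z \in rcons q i -> z \in q.
  by move=> z Hz; rewrite mem_rcons in_cons; case: eqP => [E|//]; subst; rewrite ltnn in Hz.
have sq : forall z, z \in q -> z \in rcons q i by move=> z Hz; rewrite mem_rcons in_cons Hz orbT.
move=> lk' /pushf_mem2 [lk Hlk ->] a z.
have [Hb1 Hb2] := H5 _ Hlk.
case: ifP => Hc /= Ha Haq.
- have aq := inq a (Hb1 a Ha) Haq.
  have Lsub : {subset lk.2 <= rcons lk.2 i} by move=> y Hy; rewrite mem_rcons in_cons Hy orbT.
  rewrite mem_rcons in_cons => /orP [/eqP Ez|Hz] Hzq.
  + subst z; case/andP: Hc => _ /andP [_ /hasP [y Hy Hyq]].
    have [m [j [Hs [Haj [Hjy H]]]]] := L lk Hlk a y Ha aq Hy Hyq.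
    have mi : m < i by apply: olt; apply: (mem_subseq Hs); rewrite mem_head.
    have yi := qlt y Hyq.
    exists m, j; do 3 split => //; first slia.
    right; case: H => [Hym|[y' [Hy'1 [Hy'2 [H1' [H2' H3']]]]]].
    * by exists y; split; [exact: Lsub Hy|split; [exact: sq Hyq|]].
    * by exists y'; split; [exact: Lsub Hy'1|split; [exact: sq Hy'2|split; [|slia]]].
  + have zq := inq z (Hb2 z Hz) Hzq.
    apply: W_mono (L lk Hlk a z Ha aq Hz zq) => // y _ Hy _; exact: sq.
- move=> Hz Hzq.
  have aq := inq a (Hb1 a Ha) Haq; have zq := inq z (Hb2 z Hz) Hzq.
  apply: W_mono (L lk Hlk a z Ha aq Hz zq) => // y _ Hy _; exact: sq.
Qed.

Lemma push_many n d : forall i q locks out, GI n (JQ i q locks out) -> i + d <= n.+1 ->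
  exists q' locks', sljq_reach n (JQ i q locks out) (JQ (i + d) q' locks' out) /\
    GI n (JQ (i + d) q' locks' out).
Proof.
elim: d => [|d IH] i q locks out G Hd.
  by exists q, locks; rewrite addn0; split => //; apply: reach_refl.
have Hi : i <= n by slia.
have G1 := push_GI Hi G.
have [q' [locks' [R G']]] := IH _ _ _ _ G1 ltac:(slia).
exists q', locks'; rewrite -addSnnS; split => //.
exact: reach_step (step_push _ _ _ Hi) R.
Qed.

Lemma subseq_rcons_same (s t : seq nat) x : subseq s t -> subseq (rcons s x) (rcons t x).
Proof. by move=> H; rewrite -!cats1 cat_subseq. Qed.

Lemma mem_del (P S : seq nat) x y : y != x -> y \in P ++ x :: S -> y \in P ++ S.
Proof. by move=> N; rewrite !mem_cat in_cons (negbTE N). Qed.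

Lemma output_step n i q locks out x : GI n (JQ i q locks out) -> x \in q ->
  ~~ is_locked q locks x ->
  (forall z, z \in q -> x < z -> exists2 m, m \in out & z < m) ->
  exists q' locks', sljq_reach n (JQ i q locks out) (JQ i q' locks' (rcons out x)) /\
    GI n (JQ i q' locks' (rcons out x)).
Proof.
move=> [B L] Hx Hnl Hbig.
have H4 := bB4 B.
move: H4 B L Hnl Hbig; case/splitPr: Hx => F Bk H4 B L Hnl Hbig.
case: F H4 B L Hnl Hbig => [|f F] H4 B L Hnl Hbig.
-
  have st := @step_front n i x Bk locks out.
  exists Bk, locks; split; first exact: reach1.
  split; first exact: base_step st B.
  move=> lk Hlk a z Ha Haq Hz Hzq /=.
  have sq : forall z, z \in Bk -> z \in x :: Bk by move=> z' Hz'; rewrite in_cons Hz' orbT.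
  have xa : x < a by apply: pw_front H4 Haq.
  apply: W_mono (L lk Hlk a z Ha (sq a Haq) Hz (sq z Hzq)) => //.
    exact: subseq_rcons.
  move=> y _; rewrite in_cons => /orP [/eqP ->|//]; slia.
-
  set FF := f :: F.
  have st := @step_jump n i FF x Bk locks out isT Hnl.
  exists (FF ++ Bk), (rcons locks (FF, Bk)); split; first exact: reach1.
  split; first exact: base_step st B.
  have sq : forall z, z \in FF ++ Bk -> z \in FF ++ x :: Bk.
    by move=> z; rewrite !mem_cat in_cons => /orP [->|->]; rewrite ?orbT.
  move=> lk /=; rewrite mem_rcons in_cons => /orP [/eqP ->|Hlk] a z /= Ha Haq Hz Hzq.
  + have ax := pw_splitF H4 Ha; have xz := pw_splitB H4 Hz.
    have [m Hm zm] := Hbig z (sq z Hzq) xz.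
    exists m, x; split; last by split; [|split; [|left]].
    by apply: (@subseq_rcons_same [:: m] out x); rewrite sub1seq.
  + apply: W_mono (L lk Hlk a z Ha (sq a Haq) Hz (sq z Hzq)) => //.
      exact: subseq_rcons.
    move=> y Hy Hyq _; case: (eqVneq y x) => [Ey|Ny]; last exact: mem_del Ny Hyq.
    subst y; case/negP: Hnl; apply/hasP; exists lk => //.
    by rewrite Hy andbT /lock_in_force; apply/hasP; exists a => //; apply: sq.
Qed.

Lemma two_order (d : seq nat) a y : a \in d -> y \in d -> a != y ->
  subseq [:: a; y] d \/ subseq [:: y; a] d.
Proof.
elim: d => [//|h d IH]; rewrite !in_cons => Ha Hy Nay.
case: (eqVneq a h) => [Eah|Nah].
  subst h; left; rewrite /= eqxx sub1seq.
  by move: Hy; rewrite eq_sym (negbTE Nay).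
case: (eqVneq y h) => [Eyh|Nyh].
  subst h; right; rewrite /= eqxx sub1seq.
  by move: Ha; rewrite (negbTE Nah).
move: Ha Hy; rewrite (negbTE Nah) (negbTE Nyh) /= => Ha Hy.
by case: (IH Ha Hy Nay) => H; [left|right]; apply: subseq_trans H (subseq_cons _ _).
Qed.

Lemma unlock n pi k i q locks out :
  perm_eq pi (iota 1 n) -> avoids pi [:: 4; 2; 3; 1] -> avoids pi [:: 4; 2; 5; 1; 3] ->
  GI n (JQ i q locks out) -> out = take k pi -> k < size pi ->
  nth 0 pi k \in q -> ~~ is_locked q locks (nth 0 pi k).
Proof.
move=> Hp A4 A5 [B L] Eo Hk Hxq.
set x := nth 0 pi k in Hxq *.
apply/negP => /hasP [lk Hlk /andP [/hasP [a Ha Haq] Hx]].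
have [m [j [Hs [Haj [Hjx H]]]]] := L lk Hlk a x Ha Haq Hx Hxq.
have Hpi : pi = take k pi ++ x :: drop k.+1 pi by rewrite -drop_nth // cat_take_drop.
have indrop : forall b, b \in q -> b != x -> b \in drop k.+1 pi.
  move=> b Hb Nb.
  have bpi : b \in pi.
    rewrite (perm_mem Hp) mem_iota.
    have := mem_q_lt B Hb; have := bB1 B; rewrite /=; slia.
  move: bpi; rewrite {1}Hpi mem_cat in_cons (negbTE Nb) /= => /orP [Hbt|//].
  by exfalso; apply: (out_notq B (z := b)); rewrite /= ?Eo.
have build : forall s1 s2, subseq s1 (take k pi) -> subseq s2 (x :: drop k.+1 pi) ->
    subseq (s1 ++ s2) pi.
  by move=> s1 s2 H1 H2; rewrite [X in subseq _ X]Hpi; apply: cat_subseq.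
have ad : a \in drop k.+1 pi by apply: indrop => //; rewrite neq_ltn (ltn_trans Haj Hjx).
case: H => [Hxm|[y [Hy1 [Hy2 [Hjy [Hym Hmx]]]]]].
- apply: A4; apply/P4_contains; exists m, j, x, a; split; last by [].
  apply: (build [:: m; j] [:: x; a]); first by rewrite -Eo.
  by rewrite /= eqxx sub1seq.
- have yd : y \in drop k.+1 pi by apply: indrop => //; rewrite neq_ltn (ltn_trans Hym Hmx).
  have Nay : a != y by rewrite neq_ltn (ltn_trans Haj Hjy).
  case: (two_order ad yd Nay) => Hd.
  + apply: A5; apply/P5_contains; exists m, j, x, a, y; split; last by [].
    apply: (build [:: m; j] [:: x; a; y]); first by rewrite -Eo.
    by rewrite /= eqxx.
  + apply: A4; apply/P4_contains; exists m, j, y, a; split; last by [].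
    apply: (build [:: m; j] [:: y; a]); first by rewrite -Eo.
    exact: subseq_trans Hd (subseq_cons _ _).
Qed.

Lemma gstep n pi k i q locks :
  perm_eq pi (iota 1 n) -> avoids pi [:: 4; 2; 3; 1] -> avoids pi [:: 4; 2; 5; 1; 3] ->
  k < n -> GI n (JQ i q locks (take k pi)) -> (i = 1 \/ i.-1 \in take k pi) ->
  exists i' q' locks', sljq_reach n (JQ i q locks (take k pi)) (JQ i' q' locks' (take k.+1 pi))
    /\ GI n (JQ i' q' locks' (take k.+1 pi)) /\ (i' = 1 \/ i'.-1 \in take k.+1 pi).
Proof.
move=> Hp A4 A5 Hk G G0.
have Hsz : size pi = n by rewrite (perm_size Hp) size_iota.
have Hk' : k < size pi by rewrite Hsz.
set x := nth 0 pi k.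
have Ht : take k.+1 pi = rcons (take k pi) x by rewrite (take_nth 0 Hk').
have Hpi : pi = take k pi ++ x :: drop k.+1 pi by rewrite -drop_nth // cat_take_drop.
have xpi : x \in pi by apply: mem_nth.
have xr : 0 < x <= n by move: xpi; rewrite (perm_mem Hp) mem_iota; slia.
have xnt : x \notin take k pi.
  have := perm_uniq Hp; rewrite iota_uniq {1}Hpi cat_uniq => /and3P [_ Hh _].
  by apply/negP => Hxt; move/negP: Hh; apply; apply/hasP; exists x; rewrite ?mem_head.
rewrite Ht.
case: (ltnP x i) => Hxi.
- have xq : x \in q.
    have := bB3 (gB G) x; rewrite /= Hxi andbT (proj1 (andP xr)) mem_cat (negbTE xnt) /=.
    by move=> ->.
  have Hbig : forall z, z \in q -> x < z -> exists2 m, m \in take k pi & z < m.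
    move=> z Hz _; case: G0 => [Ei|Hm].
      by subst i; have := mem_q_lt (gB G) xq; rewrite /=; slia.
    exists i.-1 => //.
    have := mem_q_lt (gB G) Hz; rewrite /= => zr.
    have : z != i.-1 by apply/eqP => E; subst z; exact: out_notq (gB G) Hm Hz.
    slia.
  have Hnl := unlock Hp A4 A5 G erefl Hk' xq.
  have [q' [locks' [R G']]] := output_step G xq Hnl Hbig.
  exists i, q', locks'; do 2 split => //.
  case: G0 => [->|Hm]; [by left|right; by rewrite mem_rcons in_cons Hm orbT].
- have Hd : i + (x.+1 - i) <= n.+1 by slia.
  have [q1 [l1 [R1 G1]]] := push_many G Hd.
  have Ei : i + (x.+1 - i) = x.+1 by slia.
  rewrite Ei in R1 G1.
  have xq : x \in q1.
    have := bB3 (gB G1) x; rewrite /= ltnSn andbT (proj1 (andP xr)) mem_cat (negbTE xnt) /=.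
    by move=> ->.
  have Hbig : forall z, z \in q1 -> x < z -> exists2 m, m \in take k pi & z < m.
    move=> z Hz Hxz; have := mem_q_lt (gB G1) Hz; rewrite /=; slia.
  have Hnl := unlock Hp A4 A5 G1 erefl Hk' xq.
  have [q' [locks' [R G']]] := output_step G1 xq Hnl Hbig.
  exists x.+1, q', locks'; split; first exact: reach_trans R1 R.
  split => //; right; by rewrite /= mem_rcons mem_head.
Qed.

Lemma giter n pi :
  perm_eq pi (iota 1 n) -> avoids pi [:: 4; 2; 3; 1] -> avoids pi [:: 4; 2; 5; 1; 3] ->
  forall k, k <= n -> exists i q locks,
    sljq_reach n (JQ 1 [::] [::] [::]) (JQ i q locks (take k pi)) /\
    GI n (JQ i q locks (take k pi)) /\ (i = 1 \/ i.-1 \in take k pi).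
Proof.
move=> Hp A4 A5; elim=> [|k IH] Hk.
  exists 1, [::], [::]; rewrite take0; split; first exact: reach_refl.
  by split; [split; [exact: base_init| by []]|left].
have [i [q [locks [R [G G0]]]]] := IH (ltnW Hk).
have [i' [q' [locks' [R' [G' G0']]]]] := gstep Hp A4 A5 Hk G G0.
exists i', q', locks'; split; first exact: reach_trans R R'.
by split.
Qed.

Lemma backward n pi : perm_eq pi (iota 1 n) ->
  avoids pi [:: 4; 2; 3; 1] -> avoids pi [:: 4; 2; 5; 1; 3] -> sljq_output n pi.
Proof.
move=> Hp A4 A5.
have Hsz : size pi = n by rewrite (perm_size Hp) size_iota.
have [i [q [locks [R [G _]]]]] := giter Hp A4 A5 (leqnn n).
have Et : take n pi = pi by rewrite -{1}Hsz take_size.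
rewrite Et in R G.
have B := gB G.
have Hsub : {subset pi ++ q <= iota 1 i.-1}.
  move=> z; rewrite (bB3 B) mem_iota /=; slia.
have := uniq_leq_size (bB2 B) Hsub.
rewrite size_cat Hsz size_iota => Hle.
have := bB1 B; rewrite /= => Hi.
have Eq : size q = 0.
move: Hle Hi; rewrite /=; clear; lia.
have Ei : i = n.+1 by move: Hle Hi; rewrite /=; clear; lia.
move/size0nil: Eq => Eq; subst q i.
by exists locks.
Qed.

Theorem mainTheorem3 (n : nat) (pi : seq nat) :
  perm_eq pi (iota 1 n) ->
  (sljq_output n pi <->
   (avoids pi [:: 4; 2; 3; 1] /\ avoids pi [:: 4; 2; 5; 1; 3])).
Proof.
move=> Hp; split; first exact: forward.
by case=> A4 A5; apply: backward.
Qed.
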